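(* Let $\mathcal{G}$ be a tomographically local GPT and let $\hat{\xi}:\mathcal{G}\to\mathbf{QuasiSubStoch}$ be a quasiprobabilistic model of $\mathcal{G}$. Then for each system $A$ of $\mathcal{G}$ there is an invertible linear map $\chi_A:A\to\mathbb{R}^{\Lambda_A}$ (where $\hat\xi(A)=\mathbb{R}^{\Lambda_A}$) such that for every process $T:A\to B$ of $\mathcal{G}$, $$\hat{\xi}(T)=\chi_B\circ T\circ\chi_A^{-1},$$ and moreover $\mathbf{1}_{\Lambda_A}\circ\chi_A=u_A$, where $\mathbf{1}_{\Lambda_A}$ is the all-ones covector on $\mathbb{R}^{\Lambda_A}$ and $u_A$ is the deterministic effect of $A$.
   Context: A process theory consists of systems (closed under a composition $A\otimes B$, with a trivial system $I$) and processes $T:A\to B$, closed under sequential composition $\circ$ and parallel composition $\otimes$ and containing identities; processes $I\to A$ are states, $A\to I$ effects, $I\to I$ scalars. $\mathbf{RLinear}$ is the process theory of finite-dimensional real vector spaces (composite $=$ tensor product, trivial system $\mathbb{R}$) and linear maps. $\mathbf{QuasiSubStoch}$ is the sub-process theory of $\mathbf{RLinear}$ whose systems are the spaces $\mathbb{R}^\Lambda$ of real functions on finite sets $\Lambda$ (with $\mathbb{R}^{\Lambda}\otimes\mathbb{R}^{\Lambda'}=\mathbb{R}^{\Lambda\times\Lambda'}$ and trivial system $\mathbb{R}^{\{*\}}=\mathbb{R}$), and whose processes $\mathbb{R}^\Lambda\to\mathbb{R}^{\Lambda'}$ are linear maps given by real matrices $f(\lambda'|\lambda)$ (quasi-substochastic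 maps; no positivity is required). The all-ones covector $\mathbf{1}_\Lambda:\mathbb{R}^\Lambda\to\mathbb{R}$ is $v\mapsto\sum_{\lambda}v(\lambda)$. A tomographically local GPT is here a sub-process theory $\mathcal{G}$ of $\mathbf{RLinear}$ (closed under $\circ$, $\otimes$, containing identities) such that: each system $A$ is a finite-dimensional real vector space and composites are tensor products; the states of $A$ span $A$ and the effects on $A$ span $A^*$; every scalar lies in $[0,1]$; for each type the set of processes is closed under convex combinations; each system $A$ has a distinguished deterministic effect $u_A$ with $u_{A\otimes B}=u_A\otimes u_B$. A quasiprobabilistic model of $\mathcal{G}$ is a map $\hat\xi:\mathcal{G}\to\mathbf{QuasiSubStoch}$ that is diagram-preserving (it assigns to each system $A$ a space $\mathbb{R}^{\Lambda_A}$, with $\hat\xi(A\otimes B)=\mathbb{R}^{\Lambda_A}\otimes\mathbb{R}^{\Lambda_B}$ and $\hat\xi(I)=\mathbb{R}$, and to each process $T:A\to B$ a quasi-substochastic map $\hat\xi(T):\mathbb{R}^{\Lambda_A}\to\mathbb{R}^{\Lambda_B}$, preserving $\circ$, $\otimes$ and identities) and satisfies: (1) $\hat\xi(u_A)=\mathbf{1}_{\Lambda_A}$ for each system $A$; (2) $\hat\xi(s)=s$ for every scalar $s$ (empirical adequacy); (3) whenever a process $T$ is a convex combination $\sum_i\omega_iT_i$ of processes of the same type, $\hat\xi(T)=\sum_i\omega_i\hat\xi(T_i)$, and whenever an effect is a coarse-graining (sum) of effects, its image is the sum of their images. *)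

(* Defs.v *)
From HB Require Import structures.
From mathcomp Require Import all_boot all_order all_algebra.
From mathcomp Require Import mxtens.
From mathcomp Require Import reals.
Set Implicit Arguments.
Unset Strict Implicit.
Unset Printing Implicit Defensive.
Import Order.TTheory GRing.Theory Num.Theory.
Local Open Scope ring_scope.

(*  A linear map  V_A -> V_B  between the finite-dimensional spaces          *)
(*  V_A = R^(sdim A), V_B = R^(sdim B)  is a matrix  'M[R]_(sdim B, sdim A)     *)
(*  acting on column vectors; sequential composition  g o f  is  g *m f.    *)
(*  The tensor product R^m (x) R^n is identified with R^(m*n) through the    *)
(*  Kronecker product  tensmx  ( *t ) of mathcomp-real-closed's mxtens.     *)

Definition tcast (R : Type) (m n p q r s : nat)
  (em : m = (p * q)%N) (en : n = (r * s)%N) (M : 'M[R]_(p * q, r * s))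
  : 'M[R]_(m, n) := castmx (esym em, esym en) M.

(* Raw data of a sub-process theory of RLinear whose composites are tensor
   products (tomographic locality).                                          *)
Record GPTdata (R : realType) := {
  sys : Type;
  sdim : sys -> nat;
  tens : sys -> sys -> sys;
  Isys : sys;
  sdim_tens : forall A B, sdim (tens A B) = (sdim A * sdim B)%N;
  sdim_Isys : sdim Isys = 1%N;
  proc : forall A B, 'M[R]_(sdim B, sdim A) -> Prop;
  udet : forall A, 'M[R]_(sdim Isys, sdim A)
}.
Arguments proc {R} g {A B}.
Arguments sdim {R} g A.
Arguments tens {R} g A B.
Arguments Isys {R} g.
Arguments sys {R} g.
Arguments udet {R} g A.
Arguments sdim_tens {R} g A B.
Arguments sdim_Isys {R} g.

Section GPT.
Variables (R : realType) (G : GPTdata R).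

Definition ptens (A A' B B' : sys G)
  (f : 'M[R]_(sdim G B, sdim G A)) (g : 'M[R]_(sdim G B', sdim G A'))
  : 'M[R]_(sdim G (tens G B B'), sdim G (tens G A A')) :=
  tcast (sdim_tens G B B') (sdim_tens G A A') (f *t g).

Definition sdim_Isys2 : (sdim G (Isys G) * sdim G (Isys G))%N = 1%N :=
  congr2 muln (sdim_Isys G) (sdim_Isys G).

Definition is_TL_GPT : Prop :=
  (forall A, proc G (1%:M : 'M[R]_(sdim G A))) /\
  (forall A B C (f : 'M[R]_(sdim G B, sdim G A)) (g : 'M[R]_(sdim G C, sdim G B)),
      proc G f -> proc G g -> proc G (g *m f)) /\
  (forall A A' B B' (f : 'M[R]_(sdim G B, sdim G A))
          (g : 'M[R]_(sdim G B', sdim G A')),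
      proc G f -> proc G g -> proc G (ptens f g)) /\
  (forall A (v : 'M[R]_(sdim G A, sdim G (Isys G))),
      exists n (c : 'I_n -> R) (s : 'I_n -> 'M[R]_(sdim G A, sdim G (Isys G))),
        (forall i, proc G (s i)) /\ v = \sum_(i < n) c i *: s i) /\
  (forall A (v : 'M[R]_(sdim G (Isys G), sdim G A)),
      exists n (c : 'I_n -> R) (e : 'I_n -> 'M[R]_(sdim G (Isys G), sdim G A)),
        (forall i, proc G (e i)) /\ v = \sum_(i < n) c i *: e i) /\
  (forall (s : 'M[R]_(sdim G (Isys G), sdim G (Isys G))), proc G s ->
      forall i j, 0 <= s i j <= 1) /\
  (forall A B n (w : 'I_n -> R) (T : 'I_n -> 'M[R]_(sdim G B, sdim G A)),
      (forall i, 0 <= w i) -> \sum_(i < n) w i = 1 ->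
      (forall i, proc G (T i)) -> proc G (\sum_(i < n) w i *: T i)) /\
  (forall A, proc G (udet G A)) /\
  (forall A B,
      castmx (sdim_Isys G, sdim_tens G A B) (udet G (tens G A B))
      = castmx (sdim_Isys2, erefl (sdim G A * sdim G B)%N)
               (udet G A *t udet G B)).

(* Raw data of a diagram-preserving map  xi : G -> QuasiSubStoch.
   xi(A) = R^(Lambda_A) with Lambda_A = 'I_(lam A) (any finite set is in
   bijection with such an ordinal); xi(T) is an arbitrary real matrix. *)
Record QModeldata := {
  lam : sys G -> nat;
  lam_tens : forall A B, lam (tens G A B) = (lam A * lam B)%N;
  lam_Isys : lam (Isys G) = 1%N;
  xi : forall A B, 'M[R]_(sdim G B, sdim G A) -> 'M[R]_(lam B, lam A)
}.

Definition is_qmodel (X : QModeldata) : Prop :=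
  let xi := @xi X in
  (forall A, xi A A 1%:M = 1%:M) /\
  (forall A B C (f : 'M[R]_(sdim G B, sdim G A)) (g : 'M[R]_(sdim G C, sdim G B)),
      proc G f -> proc G g -> xi A C (g *m f) = xi B C g *m xi A B f) /\
  (forall A A' B B' (f : 'M[R]_(sdim G B, sdim G A))
          (g : 'M[R]_(sdim G B', sdim G A')),
      proc G f -> proc G g ->
      xi (tens G A A') (tens G B B') (ptens f g)
      = tcast (lam_tens X B B') (lam_tens X A A') (xi A B f *t xi A' B' g)) /\
  (forall A, xi A (Isys G) (udet G A) = const_mx 1) /\
  (forall (s : 'M[R]_(sdim G (Isys G), sdim G (Isys G))), proc G s ->
      castmx (lam_Isys X, lam_Isys X) (xi (Isys G) (Isys G) s)
      = castmx (sdim_Isys G, sdim_Isys G) s) /\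
  (forall A B n (w : 'I_n -> R) (T : 'I_n -> 'M[R]_(sdim G B, sdim G A)),
      (forall i, 0 <= w i) -> \sum_(i < n) w i = 1 ->
      (forall i, proc G (T i)) ->
      xi A B (\sum_(i < n) w i *: T i) = \sum_(i < n) w i *: xi A B (T i)) /\
  (forall A n (e : 'I_n -> 'M[R]_(sdim G (Isys G), sdim G A)),
      (forall i, proc G (e i)) -> proc G (\sum_(i < n) e i) ->
      xi A (Isys G) (\sum_(i < n) e i) = \sum_(i < n) xi A (Isys G) (e i)).

End GPT.
Arguments lam {R G} _ A.
Arguments xi {R G} _ {A B}.

(* Main.v *)
Require Import Defs.
From HB Require Import structures.
From mathcomp Require Import all_boot all_order all_algebra.
From mathcomp Require Import mxtens.
From mathcomp Require Import reals.
From mathcomp Require Import ring lra.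
From Stdlib Require Import Classical ClassicalEpsilon.
Import Order.TTheory GRing.Theory Num.Theory.
Local Open Scope ring_scope.
Set Implicit Arguments.
Unset Strict Implicit.

Lemma castJJ (R : realType) a b (ea : a = 1%N) (eb : b = 1%N) :
  castmx (esym ea, esym eb) (1%:M : 'M[R]_1) *m castmx (esym eb, esym ea) (1%:M : 'M[R]_1) = 1%:M.
Proof. subst. by rewrite !castmx_id mulmx1. Qed.

Lemma castadeq (R : realType) a b (ea : a = 1%N) (eb : b = 1%N) (u : 'M[R]_a) (t : 'M[R]_b) :
  castmx (ea,ea) u = castmx (eb,eb) t ->
  u = castmx (esym ea, esym eb) (1%:M : 'M[R]_1) *m t *m castmx (esym eb, esym ea) (1%:M : 'M[R]_1).
Proof. subst. rewrite !castmx_id => ->. by rewrite mul1mx mulmx1. Qed.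

Lemma scal1 (R : realType) b (eb : b = 1%N) (t : 'M[R]_b) :
  t = (t (cast_ord (esym eb) ord0) (cast_ord (esym eb) ord0))%:M.
Proof.
subst; apply/matrixP => i j; rewrite [i]ord1 [j]ord1 !mxE /=.
by rewrite cast_ord_id mulr1n.
Qed.

Lemma bignth (T : Type) (V : zmodType) (x0 : T) (l : seq T) (F : T -> V) :
  \sum_(x <- l) F x = \sum_(i < size l) F (nth x0 l i).
Proof. by rewrite (big_nth x0) big_mkord. Qed.

Lemma castconst (R : realType) a b L (ea : a = 1%N) (eb : b = 1%N) :
  castmx (esym eb, esym ea) (1%:M : 'M[R]_1) *m (const_mx 1 : 'M[R]_(a, L)) = const_mx 1.
Proof. subst. by rewrite castmx_id mul1mx. Qed.

Section Main.
Variables (R : realType) (G : GPTdata R) (X : QModeldata G).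
Hypothesis HG : is_TL_GPT G.
Hypothesis HX : is_qmodel X.

Local Notation o := (sdim G (Isys G)).
Local Notation lI := (lam X (Isys G)).
Local Notation XI A B := (@xi R G X A B).

Lemma p_id A : proc G (1%:M : 'M[R]_(sdim G A)). Proof. by case: HG. Qed.
Lemma p_comp A B C (f : 'M[R]_(sdim G B, sdim G A)) (g : 'M[R]_(sdim G C, sdim G B)) :
  proc G f -> proc G g -> proc G (g *m f).
Proof. by case: HG => _ [H _]; apply: H. Qed.
Lemma p_states A (v : 'M[R]_(sdim G A, o)) :
  exists n (c : 'I_n -> R) (s : 'I_n -> 'M[R]_(sdim G A, o)),
        (forall i, proc G (s i)) /\ v = \sum_(i < n) c i *: s i.
Proof. by case: HG => _ [_ [_ [H _]]]; apply: H. Qed.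
Lemma p_effects A (v : 'M[R]_(o, sdim G A)) :
  exists n (c : 'I_n -> R) (s : 'I_n -> 'M[R]_(o, sdim G A)),
        (forall i, proc G (s i)) /\ v = \sum_(i < n) c i *: s i.
Proof. by case: HG => _ [_ [_ [_ [H _]]]]; apply: H. Qed.
Lemma p_scal (s : 'M[R]_(o, o)) : proc G s -> forall i j, 0 <= s i j <= 1.
Proof. by case: HG => _ [_ [_ [_ [_ [H _]]]]]; apply: H. Qed.
Lemma p_conv A B n (w : 'I_n -> R) (T : 'I_n -> 'M[R]_(sdim G B, sdim G A)) :
      (forall i, 0 <= w i) -> \sum_(i < n) w i = 1 ->
      (forall i, proc G (T i)) -> proc G (\sum_(i < n) w i *: T i).
Proof. by case: HG => _ [_ [_ [_ [_ [_ [H _]]]]]]; apply: H. Qed.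
Lemma p_udet A : proc G (udet G A).
Proof. by case: HG => _ [_ [_ [_ [_ [_ [_ [H _]]]]]]]; apply: H. Qed.

Lemma x_id A : xi X (1%:M : 'M[R]_(sdim G A)) = 1%:M. Proof. by case: HX. Qed.
Lemma x_comp A B C (f : 'M[R]_(sdim G B, sdim G A)) (g : 'M[R]_(sdim G C, sdim G B)) :
  proc G f -> proc G g -> xi X (g *m f) = xi X g *m xi X f.
Proof. by case: HX => _ [H _]; apply: H. Qed.
Lemma x_udet A : xi X (udet G A) = const_mx 1.
Proof. by case: HX => _ [_ [_ [H _]]]; apply: H. Qed.
Lemma x_adeq (s : 'M[R]_(o, o)) : proc G s ->
      castmx (lam_Isys X, lam_Isys X) (xi X s) = castmx (sdim_Isys G, sdim_Isys G) s.
Proof. by case: HX => _ [_ [_ [_ [H _]]]]; apply: H. Qed.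
Lemma x_conv A B n (w : 'I_n -> R) (T : 'I_n -> 'M[R]_(sdim G B, sdim G A)) :
      (forall i, 0 <= w i) -> \sum_(i < n) w i = 1 ->
      (forall i, proc G (T i)) ->
      xi X (\sum_(i < n) w i *: T i) = \sum_(i < n) w i *: xi X (T i).
Proof. by case: HX => _ [_ [_ [_ [_ [H _]]]]]; apply: H. Qed.
Lemma x_cg A n (e : 'I_n -> 'M[R]_(o, sdim G A)) :
      (forall i, proc G (e i)) -> proc G (\sum_(i < n) e i) ->
      xi X (\sum_(i < n) e i) = \sum_(i < n) xi X (e i).
Proof. by case: HX => _ [_ [_ [_ [_ [_ H]]]]]; apply: H. Qed.

Definition J : 'M[R]_(lI, o) := castmx (esym (lam_Isys X), esym (sdim_Isys G)) (1%:M : 'M[R]_1).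
Definition J' : 'M[R]_(o, lI) := castmx (esym (sdim_Isys G), esym (lam_Isys X)) (1%:M : 'M[R]_1).
Lemma JJ' : J *m J' = 1%:M. Proof. exact: castJJ. Qed.
Lemma J'J : J' *m J = 1%:M. Proof. exact: castJJ. Qed.
Lemma xscal (t : 'M[R]_o) : proc G t -> xi X t = J *m t *m J'.
Proof. move=> pt; apply: castadeq; exact: x_adeq. Qed.

Definition sh A (s : 'M[R]_(sdim G A, o)) : 'M[R]_(lam X A, o) := @xi R G X (Isys G) A s *m J.
Definition eh A (e : 'M[R]_(o, sdim G A)) : 'M[R]_(o, lam X A) := J' *m @xi R G X A (Isys G) e.

Lemma eh_sh A (e : 'M[R]_(o, sdim G A)) s : proc G e -> proc G s -> eh e *m sh s = e *m s.
Proof.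
move=> pe ps; rewrite /eh /sh mulmxA -(mulmxA J') -x_comp // xscal; last exact: p_comp.
by rewrite !mulmxA J'J mul1mx -mulmxA J'J mulmx1.
Qed.

Lemma sh_eh A (s : 'M[R]_(sdim G A, o)) e : proc G s -> proc G e -> sh s *m eh e = XI A A (s *m e).
Proof.
move=> ps pe; rewrite /eh /sh x_comp // mulmxA -(mulmxA _ J) JJ' mulmx1 //.
Qed.

Lemma eh_T_sh A B (e : 'M[R]_(o, sdim G B)) (T : 'M[R]_(sdim G B, sdim G A)) s :
  proc G e -> proc G T -> proc G s -> eh e *m xi X T *m sh s = e *m T *m s.
Proof.
move=> pe pT ps.
have h1 : XI B (Isys G) e *m XI A B T = XI A (Isys G) (e *m T) by rewrite x_comp.
have h2 : XI A (Isys G) (e *m T) *m XI (Isys G) A s = XI (Isys G) (Isys G) (e *m T *m s).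
  by rewrite (x_comp ps (p_comp pT pe)).
rewrite /eh /sh !mulmxA -(mulmxA J' (XI _ _ e)) h1 -(mulmxA J') h2 xscal; last by apply: p_comp => //; apply: p_comp.
by rewrite !mulmxA J'J mul1mx -mulmxA J'J mulmx1.
Qed.

Definition okL A B (L : seq (R * 'M[R]_(sdim G B, sdim G A))) :=
  forall x, x \in L -> 0 <= x.1 /\ proc G x.2.

Lemma p_conv_seq A B (l : seq (R * 'M[R]_(sdim G B, sdim G A))) :
  okL l -> \sum_(x <- l) x.1 = 1 -> proc G (\sum_(x <- l) x.1 *: x.2).
Proof.
move=> hl h1; rewrite (bignth (0, 0)); apply: p_conv.
- move=> i; exact: (hl _ (mem_nth _ (ltn_ord i))).1.
- by rewrite -(bignth (0,0) _ (fun x => x.1)).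
- move=> i; exact: (hl _ (mem_nth _ (ltn_ord i))).2.
Qed.

Lemma x_conv_seq A B (l : seq (R * 'M[R]_(sdim G B, sdim G A))) :
  okL l -> \sum_(x <- l) x.1 = 1 ->
  XI A B (\sum_(x <- l) x.1 *: x.2) = \sum_(x <- l) x.1 *: XI A B x.2.
Proof.
move=> hl h1; rewrite (bignth (0, 0)) (bignth (0,0) l (fun x => x.1 *: XI A B x.2)).
apply: x_conv.
- move=> i; exact: (hl _ (mem_nth _ (ltn_ord i))).1.
- by rewrite -(bignth (0,0) _ (fun x => x.1)).
- move=> i; exact: (hl _ (mem_nth _ (ltn_ord i))).2.
Qed.

Lemma bal_eq A B (L1 L2 : seq (R * 'M[R]_(sdim G B, sdim G A))) :
  okL L1 -> okL L2 ->
  \sum_(x <- L1) x.1 = \sum_(x <- L2) x.1 -> 0 < \sum_(x <- L1) x.1 ->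
  \sum_(x <- L1) x.1 *: x.2 = \sum_(x <- L2) x.1 *: x.2 ->
  \sum_(x <- L1) x.1 *: XI A B x.2 = \sum_(x <- L2) x.1 *: XI A B x.2.
Proof.
move=> h1 h2 eW W0 eM.
set W := \sum_(x <- L1) x.1 in eW W0.
pose f := fun x : R * 'M[R]_(sdim G B, sdim G A) => (x.1 / W, x.2).
have key : forall L, okL L -> \sum_(x <- L) x.1 = W ->
   XI A B (W^-1 *: \sum_(x <- L) x.1 *: x.2) = W^-1 *: \sum_(x <- L) x.1 *: XI A B x.2.
  move=> L hL eL.
  have e1 : W^-1 *: \sum_(x <- L) x.1 *: x.2 = \sum_(x <- map f L) x.1 *: x.2.
    by rewrite big_map scaler_sumr; apply: eq_bigr => x _; rewrite /f /= scalerA mulrC.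
  have e2 : W^-1 *: \sum_(x <- L) x.1 *: XI A B x.2 = \sum_(x <- map f L) x.1 *: XI A B x.2.
    by rewrite big_map scaler_sumr; apply: eq_bigr => x _; rewrite /f /= scalerA mulrC.
  rewrite e1 e2 x_conv_seq //.
  - move=> x /mapP [y yL ->] /=; have [? ?] := hL y yL; split => //.
    by apply: divr_ge0 => //; apply: ltW.
  - by rewrite big_map /= -mulr_suml eL mulfV // gt_eqF.
have k1 := key L1 h1 erefl; have k2 := key L2 h2 (esym eW).
rewrite eM k2 in k1.
by apply: (scalerI (a := W^-1)) => //; rewrite invr_eq0 gt_eqF.
Qed.

Lemma bal_pad1 A B (p : R) (Y0 Y1 : 'M[R]_(sdim G B, sdim G A)) L1 L2 :
  0 < p -> p < 1 -> proc G Y0 -> proc G Y1 -> Y1 = p *: Y0 -> XI A B Y1 = p *: XI A B Y0 ->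
  okL L1 -> okL L2 -> \sum_(x <- L1) x.1 <= \sum_(x <- L2) x.1 -> 0 < \sum_(x <- L2) x.1 ->
  \sum_(x <- L1) x.1 *: x.2 = \sum_(x <- L2) x.1 *: x.2 ->
  \sum_(x <- L1) x.1 *: XI A B x.2 = \sum_(x <- L2) x.1 *: XI A B x.2.
Proof.
move=> p0 p1 pY0 pY1 eY xY h1 h2 W12 W20 eM.
set W1 := \sum_(x <- L1) x.1 in W12 *; set W2 := \sum_(x <- L2) x.1 in W12 W20 *.
set d := (W2 - W1) * p / (1 - p).
have d0 : 0 <= d.
  rewrite /d; apply: divr_ge0; last by rewrite subr_ge0 ltW.
  by apply: mulr_ge0; [rewrite subr_ge0 | apply: ltW].
have := @bal_eq A B ((d / p, Y1) :: L1) ((d, Y0) :: L2).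
rewrite !big_cons /= => H.
have : d / p *: XI A B Y1 + \sum_(x <- L1) x.1 *: XI A B x.2 =
       d *: XI A B Y0 + \sum_(x <- L2) x.1 *: XI A B x.2.
  apply: H.
  - move=> x; rewrite inE => /orP [/eqP -> | xL] /=; last exact: h1.
    by split => //; apply: divr_ge0 => //; apply: ltW.
  - move=> x; rewrite inE => /orP [/eqP -> | xL] /=; last exact: h2.
    by split.
  - rewrite -/W1 -/W2 /d; field; apply/andP; split; apply/negP; move/eqP; lra.
  - have -> : d / p + W1 = d + W2.
      rewrite /d; field; apply/andP; split; apply/negP; move/eqP; lra.
    by apply: ltr_wpDl.
  - by rewrite eM eY scalerA mulfVK // gt_eqF.
rewrite xY scalerA mulfVK ?gt_eqF //.
by move/addrI.
Qed.

Lemma bal_pad A B (p : R) (Y0 Y1 : 'M[R]_(sdim G B, sdim G A)) L1 L2 :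
  0 < p -> p < 1 -> proc G Y0 -> proc G Y1 -> Y1 = p *: Y0 -> XI A B Y1 = p *: XI A B Y0 ->
  okL L1 -> okL L2 -> 0 < \sum_(x <- L1) x.1 ->
  \sum_(x <- L1) x.1 *: x.2 = \sum_(x <- L2) x.1 *: x.2 ->
  \sum_(x <- L1) x.1 *: XI A B x.2 = \sum_(x <- L2) x.1 *: XI A B x.2.
Proof.
move=> p0 p1 pY0 pY1 eY xY h1 h2 W10 eM.
case: (leP (\sum_(x <- L1) x.1) (\sum_(x <- L2) x.1)) => W12.
  apply: (bal_pad1 p0 p1 pY0 pY1 eY xY) => //; exact: lt_le_trans W12.
symmetry; apply: (bal_pad1 p0 p1 pY0 pY1 eY xY) => //; exact: ltW.
Qed.

Definition trip A := (R * ('M[R]_(sdim G A, o) * 'M[R]_(o, sdim G A)))%type.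
Definition dsum A (D : seq (trip A)) : 'M[R]_(sdim G A) :=
  \sum_(x <- D) x.1 *: (x.2.1 *m x.2.2).
Definition dok A (D : seq (trip A)) := forall x, x \in D -> proc G x.2.1 /\ proc G x.2.2.

Definition i0 : 'I_o := cast_ord (esym (sdim_Isys G)) ord0.

Lemma dec_exists A : exists D : seq (trip A), dok D /\ dsum D = 1%:M.
Proof.
pose P (M : 'M[R]_(sdim G A)) := exists D : seq (trip A), dok D /\ dsum D = M.
suff: P 1%:M by [].
rewrite mx1_sum_delta.
have -> : \sum_i (delta_mx i i : 'M[R]_(sdim G A)) = \sum_i delta_mx i i0 *m delta_mx i0 i.
  by apply: eq_bigr => i _; rewrite mul_delta_mx.
apply: (big_ind P).
- exists [::]; split => //; by rewrite /dsum big_nil.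
- move=> M N [D1 [o1 e1]] [D2 [o2 e2]]; exists (D1 ++ D2); split.
    by move=> x; rewrite mem_cat => /orP [] ?; [apply: o1 | apply: o2].
  by rewrite /dsum big_cat -e1 -e2.
- move=> i _.
  have [n [c [s [ps ->]]]] := p_states (delta_mx i i0 : 'M[R]_(sdim G A, o)).
  have [m [b [e [pe ->]]]] := p_effects (delta_mx i0 i : 'M[R]_(o, sdim G A)).
  exists [seq (c k * b j, (s k, e j)) | k <- index_enum 'I_n, j <- index_enum 'I_m].
  split.
    move=> x /allpairsP [[k j] [_ _ ->]] /=; split; [exact: ps | exact: pe].
  rewrite /dsum big_allpairs_dep /= mulmx_suml.
  apply: eq_bigr => k _; rewrite mulmx_sumr; apply: eq_bigr => j _.
  by rewrite -scalemxAl -scalemxAr scalerA.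
Qed.

Lemma splitL (V : lmodType R) (T : Type) (D : seq T) (c : T -> R) (F : T -> V) (Z : V) :
  (Z + \sum_(x <- D | ~~ (0 <= c x)) - c x *: F x = \sum_(x <- D | 0 <= c x) c x *: F x) <->
  (\sum_(x <- D) c x *: F x = Z).
Proof.
rewrite [\sum_(x <- D) _](bigID (fun x => 0 <= c x)) /=.
have -> : \sum_(x <- D | ~~ (0 <= c x)) - c x *: F x = - \sum_(x <- D | ~~ (0 <= c x)) c x *: F x.
  by rewrite -sumrN; apply: eq_bigr => x _; rewrite scaleNr.
by split => [<-|<-]; [rewrite addrNK | rewrite addrK].
Qed.

Lemma splitW (T : Type) (D : seq T) (c : T -> R) (Z : R) :
  (Z + \sum_(x <- D | ~~ (0 <= c x)) - c x = \sum_(x <- D | 0 <= c x) c x) <->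
  (\sum_(x <- D) c x = Z).
Proof.
rewrite [\sum_(x <- D) _](bigID (fun x => 0 <= c x)) /= sumrN.
by split => [<-|<-]; [rewrite addrNK | rewrite addrK].
Qed.

Lemma key A (D : seq (trip A)) : dok D -> dsum D = 1%:M ->
  \sum_(x <- D) x.1 *: XI A A (x.2.1 *m x.2.2) = 1%:M.
Proof.
move=> hD eD.
case: (posnP (sdim G A)) => [d0 | dpos].
  have hu : udet G A = \sum_(i < 0) (0 : 'M[R]_(o, sdim G A)).
    apply/matrixP => i j; have : (j < 0)%N by rewrite -d0. by [].
  have E : (const_mx 1 : 'M[R]_(lI, lam X A)) = 0.
    have pu : proc G (\sum_(i < 0) (0 : 'M[R]_(o, sdim G A))) by rewrite -hu; exact: p_udet.
    rewrite -(x_udet A) hu x_cg //; first by rewrite big_ord0.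
    by case.
  case: (posnP (lam X A)) => [L0 | Lpos].
    apply/matrixP => i j; have : (i < 0)%N by rewrite -L0. by [].
  exfalso; move/matrixP: E => /(_ (cast_ord (esym (lam_Isys X)) ord0) (Ordinal Lpos)).
  by rewrite !mxE => /eqP; rewrite oner_eq0.
have [s0 ps0] : exists s0 : 'M[R]_(sdim G A, o), proc G s0.
  have [n [c [s [ps ev]]]] := p_states (delta_mx (Ordinal dpos) i0 : 'M[R]_(sdim G A, o)).
  case: n c s ps ev => [|n] c s ps ev; last by exists (s ord0).
  move/matrixP: ev => /(_ (Ordinal dpos) i0); rewrite big_ord0 !mxE !eqxx /= => /eqP.
  by rewrite oner_eq0.
pose L1 := (1, 1%:M) :: [seq (- x.1, x.2.1 *m x.2.2) | x <- D & ~~ (0 <= x.1)].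
pose L2 := [seq (x.1, x.2.1 *m x.2.2) | x <- D & 0 <= x.1].
have ok1 : okL L1.
  move=> x; rewrite inE => /orP [/eqP -> | /mapP [y]]; first by split => //; exact: p_id.
  rewrite mem_filter => /andP [yn yD] -> /=; split; first by rewrite oppr_ge0 ltW // ltNge.
  by have [? ?] := hD y yD; exact: p_comp.
have ok2 : okL L2.
  move=> x /mapP [y]; rewrite mem_filter => /andP [yp yD] -> /=; split => //.
  by have [? ?] := hD y yD; exact: p_comp.
have sumL (V : lmodType R) (F : 'M[R]_(sdim G A) -> V) :
  \sum_(x <- L1) x.1 *: F x.2 = F 1%:M + \sum_(x <- D | ~~ (0 <= x.1)) - x.1 *: F (x.2.1 *m x.2.2).
  by rewrite big_cons big_map big_filter scale1r.
have sumR (V : lmodType R) (F : 'M[R]_(sdim G A) -> V) :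
  \sum_(x <- L2) x.1 *: F x.2 = \sum_(x <- D | 0 <= x.1) x.1 *: F (x.2.1 *m x.2.2).
  by rewrite big_map big_filter.
have eM : \sum_(x <- L1) x.1 *: x.2 = \sum_(x <- L2) x.1 *: x.2.
  rewrite (sumL _ id) (sumR _ id) /=; apply/(@splitL _ _ D (fun x : trip A => x.1) (fun x => x.2.1 *m x.2.2)); exact: eD.
have W1 : 0 < \sum_(x <- L1) x.1.
  rewrite big_cons /= big_map big_filter; apply: (@lt_le_trans _ _ 1) => //; rewrite lerDl.
  by apply: sumr_ge0 => x; rewrite -ltNge -oppr_gt0 => /ltW.
apply/(@splitL _ _ D (fun x : trip A => x.1) (fun x => XI A A (x.2.1 *m x.2.2))).
rewrite -(x_id A) -(sumL _ (XI A A)) -(sumR _ (XI A A)).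
case: (classic (exists Q : 'M[R]_o, proc G Q /\ Q <> 1%:M)) => [[Q [pQ nQ]] | hall].
  pose P := \sum_(x <- [:: (1/2, Q); (1/2, 1%:M)]) x.1 *: x.2.
  have pP : proc G P.
    apply: p_conv_seq.
      move=> x; rewrite !inE => /orP [] /eqP -> /=; (split; [lra | ]); [exact: pQ | exact: p_id].
    rewrite !big_cons big_nil /=; lra.
  set q := Q i0 i0.
  set p := P i0 i0.
  have hp : p = 1/2 * q + 1/2.
    rewrite /p /P !big_cons big_nil addr0 !mxE eqxx /=.
    by rewrite mulr1.
  have q01 : 0 <= q <= 1 := p_scal pQ i0 i0.
  have q1 : q != 1.
    apply/eqP => q1; apply: nQ; rewrite (scal1 (sdim_Isys G) Q).
    by rewrite -/i0 -/q q1.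
  have p0 : 0 < p by move: q01 => /andP [? ?]; rewrite hp; lra.
  have p1 : p < 1.
    move: q01 => /andP [? ?]; have : q < 1 by rewrite lt_neqAle q1.
    rewrite hp; lra.
  have xP : XI (Isys G) (Isys G) P = p *: 1%:M.
    by rewrite xscal // (scal1 (sdim_Isys G) P) mul_mx_scalar -scalemxAl JJ'.
  apply: (@bal_pad A A p (s0 *m udet G A) (s0 *m P *m udet G A)) => //.
  - exact: (p_comp (p_udet A) ps0).
  - exact: (p_comp (p_udet A) (p_comp pP ps0)).
  - by rewrite {1}(scal1 (sdim_Isys G) P) mul_mx_scalar -scalemxAl.
  - rewrite (x_comp (p_udet A) (p_comp pP ps0)) (x_comp pP ps0) xP -scalemxAr mulmx1.
    by rewrite -scalemxAl (x_comp (p_udet A) ps0).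
have h1 : forall Q : 'M[R]_o, proc G Q -> Q = 1%:M.
  by move=> Q pQ; apply: NNPP => nQ; apply: hall; exists Q.
have sc : \sum_(x <- D) x.1 = 1.
  have e1 : udet G A *m dsum D *m s0 = (\sum_(x <- D) x.1) *: 1%:M.
    rewrite /dsum mulmx_sumr mulmx_suml scaler_suml; apply: eq_big_seq => x xD.
    have [ps pe] := hD x xD.
    rewrite -scalemxAr -scalemxAl !mulmxA (h1 (udet G A *m x.2.1)); last exact: (p_comp ps (p_udet A)).
    rewrite mul1mx (h1 (x.2.2 *m s0)) //; exact: (p_comp ps0 pe).
  rewrite eD mulmx1 (h1 _ (p_comp ps0 (p_udet A))) in e1.
  move/matrixP: e1 => /(_ i0 i0); rewrite !mxE eqxx /=.
  by rewrite mulr1 => /esym.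
apply: bal_eq => //.
rewrite big_cons big_map big_filter /= big_map big_filter; apply/(@splitW _ D (fun x : trip A => x.1)).
exact: sc.
Qed.

Lemma sep A B (DA : seq (trip A)) (DB : seq (trip B)) :
  dok DA -> dsum DA = 1%:M -> dok DB -> dsum DB = 1%:M ->
  forall M N : 'M[R]_(sdim G B, sdim G A),
  (forall (e : 'M[R]_(o, sdim G B)) (s : 'M[R]_(sdim G A, o)),
     @proc R G B (Isys G) e -> @proc R G (Isys G) A s -> e *m M *m s = e *m N *m s) -> M = N.
Proof.
move=> oA eA oB eB M N H.
have exp : forall K : 'M[R]_(sdim G B, sdim G A), dsum DB *m K *m dsum DA =
   \sum_(x <- DB) \sum_(y <- DA) (x.1 * y.1) *: (x.2.1 *m (x.2.2 *m K *m y.2.1) *m y.2.2).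
  move=> K; rewrite /dsum !mulmx_suml; apply: eq_bigr => x _; rewrite mulmx_sumr.
  apply: eq_bigr => y _.
  by rewrite -!scalemxAl -scalemxAr scalerA !mulmxA.
have eM := exp M; have eN := exp N.
rewrite eA eB mul1mx mulmx1 in eM; rewrite eA eB mul1mx mulmx1 in eN.
rewrite eM eN; apply: eq_big_seq => x xB; apply: eq_big_seq => y yA.
have [_ pe] := oB x xB; have [ps _] := oA y yA.
by rewrite H.
Qed.

Definition Props A (t : 'M[R]_(lam X A, sdim G A) * 'M[R]_(sdim G A, lam X A) * seq (trip A)) :=
  dok t.2 /\ dsum t.2 = 1%:M /\ t.1.1 *m t.1.2 = 1%:M /\ t.1.2 *m t.1.1 = 1%:M /\
  (forall s : 'M[R]_(sdim G A, o), @proc R G (Isys G) A s -> t.1.1 *m s = sh s) /\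
  (forall e : 'M[R]_(o, sdim G A), @proc R G A (Isys G) e -> e *m t.1.2 = eh e) /\
  (forall e : 'M[R]_(o, sdim G A), @proc R G A (Isys G) e -> eh e *m t.1.1 = e).

Lemma sys_chi (A : sys G) : exists t, @Props A t.
Proof.
have [D [oD eD]] := dec_exists A.
have K := key oD eD.
have Kd : \sum_(x <- D) x.1 *: (sh x.2.1 *m eh x.2.2) = 1%:M.
  rewrite -K; apply: eq_big_seq => x xD; have [ps pe] := oD x xD.
  by rewrite sh_eh.
pose chi := \sum_(x <- D) x.1 *: (sh x.2.1 *m x.2.2).
pose psi := \sum_(x <- D) x.1 *: (x.2.1 *m eh x.2.2).
have chis : forall s : 'M[R]_(sdim G A, o), @proc R G (Isys G) A s -> chi *m s = sh s.
  move=> s ps; rewrite /chi mulmx_suml -[sh s]mul1mx -Kd mulmx_suml.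
  apply: eq_big_seq => x xD; have [ps' pe] := oD x xD.
  by rewrite -!scalemxAl; congr (_ *: _); rewrite -[RHS]mulmxA eh_sh // mulmxA.
have epsi : forall e : 'M[R]_(o, sdim G A), @proc R G A (Isys G) e -> e *m psi = eh e.
  move=> e pe; rewrite /psi mulmx_sumr -[eh e]mulmx1 -Kd mulmx_sumr.
  apply: eq_big_seq => x xD; have [ps pe'] := oD x xD.
  by rewrite -!scalemxAr; congr (_ *: _); rewrite [RHS]mulmxA eh_sh // mulmxA.
have ehchi : forall e : 'M[R]_(o, sdim G A), @proc R G A (Isys G) e -> eh e *m chi = e.
  move=> e pe; rewrite /chi mulmx_sumr -{2}[e]mulmx1 -eD /dsum mulmx_sumr.
  apply: eq_big_seq => x xD; have [ps pe'] := oD x xD.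
  by rewrite -!scalemxAr; congr (_ *: _); rewrite mulmxA eh_sh // mulmxA.
exists (chi, psi, D); split => //; split => //; split; last split => //.
  rewrite /psi mulmx_sumr -Kd; apply: eq_big_seq => x xD; have [ps pe] := oD x xD.
  by rewrite -scalemxAr mulmxA chis.
rewrite /psi mulmx_suml -eD /dsum; apply: eq_big_seq => x xD; have [ps pe] := oD x xD.
by rewrite -scalemxAl -mulmxA ehchi.
Qed.

Lemma J'const L : J' *m (const_mx 1 : 'M[R]_(lI, L)) = const_mx 1.
Proof. exact: castconst. Qed.

End Main.

Theorem proposition2 (R : realType) (G : GPTdata R) (X : QModeldata G) :
  is_TL_GPT G -> is_qmodel X ->
  exists (chi : forall A : sys G, 'M[R]_(lam X A, sdim G A))
         (chiinv : forall A : sys G, 'M[R]_(sdim G A, lam X A)),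
    (forall A, chi A *m chiinv A = 1%:M /\ chiinv A *m chi A = 1%:M) /\
    (forall (A B : sys G) (T : 'M[R]_(sdim G B, sdim G A)),
        proc G T -> xi X T = chi B *m T *m chiinv A) /\
    (forall A, (const_mx 1 : 'M[R]_(sdim G (Isys G), lam X A)) *m chi A
               = udet G A).
Proof.
move=> HG HX.
have H := sys_chi HG HX.
pose f A := proj1_sig (constructive_indefinite_description _ (H A)).
have Hf : forall A, Props (f A) := fun A => proj2_sig (constructive_indefinite_description _ (H A)).
exists (fun A => (f A).1.1), (fun A => (f A).1.2).
split; [|split].
- by move=> A; have [_ [_ [h1 [h2 _]]]] := Hf A; split.
- move=> A B T pT.
  have [oA [eA [cpA [pcA [chsA [epsA ehcA]]]]]] := Hf A.
  have [oB [eB [cpB [pcB [chsB [epsB ehcB]]]]]] := Hf B.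
  have M : (f B).1.2 *m xi X T *m (f A).1.1 = T.
    apply: (sep oA eA oB eB) => e s pe ps.
    by rewrite !mulmxA epsB // -mulmxA chsA // eh_T_sh.
  have E : xi X T = (f B).1.1 *m ((f B).1.2 *m xi X T *m (f A).1.1) *m (f A).1.2.
    by rewrite !mulmxA cpB mul1mx -mulmxA cpA mulmx1.
  by rewrite {1}E M.
- move=> A; have [_ [_ [_ [_ [_ [_ ehc]]]]]] := Hf A.
  have -> : (const_mx 1 : 'M[R]_(sdim G (Isys G), lam X A)) = eh X (udet G A).
    by rewrite /eh x_udet // J'const.
  by rewrite ehc //; exact: p_udet.
Qed.
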